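(* Let $\psi:S_X\to\mathbb{R}$ be bounded and measurable, $\sigma_X=(\sigma_X^0,\sigma_X[\cdot,\cdot])$ a memory-one strategy for $X$, and $\sigma_Y$ any behavioral strategy for $Y$, generating the measures $\nu_t$. Then $$\sum_{t=0}^\infty\lambda^t\int_{S_X\times S_Y}\Big[\psi(x)-\lambda\int_{S_X}\psi(s)\,d\sigma_X[x,y](s)\Big]\,d\nu_t(x,y)=\int_{S_X}\psi(s)\,d\sigma_X^0(s).$$
   Context: Standing framework. Let $S_X,S_Y$ be measurable spaces, and $\lambda\in(0,1)$. For $T\ge 0$ let $\mathcal{H}^T=(S_X\times S_Y)^T$ ($\mathcal{H}^0=\{\varnothing\}$) and $\mathcal{H}=\bigsqcup_{T\ge0}\mathcal{H}^T$. A behavioral strategy for $X$ (resp. $Y$) is a Markov kernel from $\mathcal{H}$ to $S_X$ (resp. $S_Y$). A memory-one strategy for $X$ is a behavioral strategy determined by a probability measure $\sigma_X^0$ on $S_X$ (used at the empty history) and a Markov kernel $(x,y)\mapsto\sigma_X[x,y]$ from $S_X\times S_Y$ to $S_X$, with $\sigma_X[h^T]=\sigma_X[x_{T-1},y_{T-1}]$ for $h^T=((x_0,y_0),\dots,(x_{T-1},y_{T-1}))$, $T\ge1$. Given behavioral strategies $\sigma_X,\sigma_Y$, put $\sigma(h)=\sigma_X[h]\otimes\sigma_Y[h]$ and define probability measures $\mu_t$ on $\mathcal{H}^{t+1}$ by $\mu_0=\sigma(\varnothing)$ and $\mu_t(E'\times E)=\int_{E'}\sigma(h)(E)\,d\mu_{t-1}(h)$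 (uniquely extended). Let $\nu_t(E)=\mu_t(\mathcal{H}^t\times E)$ be the distribution of the action pair at time $t$. *)

(* Defs.v *)
From HB Require Import structures.
From mathcomp Require Import all_boot all_order all_algebra.
From mathcomp Require Import all_classical all_reals all_analysis.
Set Implicit Arguments. Unset Strict Implicit. Unset Printing Implicit Defensive.
Import Order.TTheory GRing.Theory Num.Theory.
Import numFieldNormedType.Exports.
Local Open Scope classical_set_scope.
Local Open Scope ring_scope.

Section Histories.
Context (dX dY : measure_display) (SX : measurableType dX) (SY : measurableType dY).

(* H^0 = {empty history} (unit), H^(T+1) = H^T x (S_X x S_Y), with the
   product sigma-algebras. *)
Fixpoint histM (t : nat) : {d : measure_display & measurableType d} :=
  match t with
  | 0 => existT (fun d => measurableType d) _ unit
  | t'.+1 => existT (fun d => measurableType d) _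
               ((projT2 (histM t')) * (SX * SY))%type
  end.

Definition hist (t : nat) : measurableType (projT1 (histM t)) := projT2 (histM t).

Context (R : realType).

(* The behavioral strategy of X induced by a memory-one strategy
   (s0, k): s0 at the empty history, k (x_{T-1}, y_{T-1}) at histories of
   length T >= 1. *)
Definition memory_one (s0 : probability SX R) (k : R.-pker (SX * SY) ~> SX)
  (t : nat) : hist t -> set SX -> \bar R :=
  match t return hist t -> set SX -> \bar R with
  | 0 => fun _ => s0
  | t'.+1 => fun h => k h.2
  end.

(* A behavioral strategy for Y: a Markov (probability) kernel on the disjoint
   union of the H^T, i.e. one probability kernel H^T ~> S_Y for each T. *)
Definition behavioral_Y := forall t : nat, R.-pker (hist t) ~> SY.

Section Process.
Context (s0 : probability SX R) (k : R.-pker (SX * SY) ~> SX) (sY : behavioral_Y).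

Definition sigma (t : nat) (h : hist t) : set (SX * SY) -> \bar R :=
  (memory_one s0 k h \x sY t h)%E.

(* hmu t is the law of the history of length t: hmu 0 = Dirac at the empty
   history, hmu (t+1) = mu_t, i.e.
   mu_t(A) = int_{H^t} sigma(h)({z | (h,z) in A}) d mu_{t-1}(h). *)
Fixpoint hmu (t : nat) : set (hist t) -> \bar R :=
  match t return set (hist t) -> \bar R with
  | 0 => fun A => (\d_ tt) A
  | t'.+1 => fun A => (\int[@hmu t']_h @sigma t' h (xsection A h))%E
  end.

(* nu_t(E) = mu_t(H^t x E): law of the action pair at time t *)
Definition nu (t : nat) : set (SX * SY) -> \bar R :=
  fun E => @hmu t.+1 (setT `*` E).

End Process.
End Histories.

(* Main.v *)
Require Import Defs.
From HB Require Import structures.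
From mathcomp Require Import all_boot all_order all_algebra.
From mathcomp Require Import all_classical all_reals all_analysis.
From mathcomp Require Import measurable_realfun.
From mathcomp Require Import ring lra.
Set Implicit Arguments. Unset Strict Implicit. Unset Printing Implicit Defensive.
Import Order.TTheory GRing.Theory Num.Theory.
Import numFieldNormedType.Exports.
Local Open Scope classical_set_scope.
Local Open Scope ring_scope.
Local Open Scope ereal_scope.

Section kcst.
Context d d' (X : measurableType d) (Y : measurableType d') (R : realType).
Variable P : probability Y R.
Definition kcst : X -> {measure set Y -> \bar R} := fun _ => P.
Let mk U : measurable U -> measurable_fun [set: X] (kcst ^~ U).
Proof. by move=> _; rewrite /kcst; apply: measurable_cst. Qed.
HB.instance Definition _ := isKernel.Build _ _ X Y R kcst mk.
Let kp x : kcst x [set: Y] = 1. Proof. exact: probability_setT. Qed.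
HB.instance Definition _ := Kernel_isProbability.Build _ _ X Y R kcst kp.
End kcst.

Section kpre.
Context d d' d'' (X : measurableType d) (Y : measurableType d') (Z : measurableType d'') (R : realType).
Variable k : R.-pker Y ~> Z.
Variable f : X -> Y.
Definition kpre (mf : measurable_fun [set: X] f) : X -> {measure set Z -> \bar R} := fun x => k (f x).
Hypothesis mf : measurable_fun [set: X] f.
Let mk U : measurable U -> measurable_fun [set: X] (kpre mf ^~ U).
Proof. move=> mU; exact: (measurableT_comp (measurable_kernel k U mU) mf). Qed.
HB.instance Definition _ := isKernel.Build _ _ X Z R (kpre mf) mk.
Let kp x : kpre mf x [set: Z] = 1. Proof. exact: prob_kernel. Qed.
HB.instance Definition _ := Kernel_isProbability.Build _ _ X Z R (kpre mf) kp.
End kpre.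


Lemma xsectionT' (T1 T2 : Type) (x : T1) : xsection [set: T1 * T2] x = [set: T2].
Proof. by apply/seteqP; split => y // _; rewrite /xsection /= in_setT. Qed.

Lemma xsectionTX (T1 T2 : Type) (E : set T2) (x : T1) : xsection ([set: T1] `*` E) x = E.
Proof. by rewrite in_xsectionX// in_setT. Qed.

Section transfer.
Context d (T : measurableType d) (R : realType).
Variables (m : {measure set T -> \bar R}) (f : set T -> \bar R).
Definition tr (hfm : forall A, measurable A -> f A = m A) (f0 : forall A, 0 <= f A)
  (fT : f setT = 1) : set T -> \bar R := f.
Hypotheses (hfm : forall A, measurable A -> f A = m A) (f0 : forall A, 0 <= f A) (fT : f setT = 1).
Let tr0 : tr hfm f0 fT set0 = 0. Proof. by rewrite /tr hfm// measure0. Qed.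
Let tr_ge0 A : 0 <= tr hfm f0 fT A. Proof. exact: f0. Qed.
Let tr_sa : semi_sigma_additive (tr hfm f0 fT).
Proof.
move=> F mF tF mUF; rewrite /tr hfm//.
under eq_fun do under eq_bigr do rewrite hfm//.
exact: measure_semi_sigma_additive.
Qed.
HB.instance Definition _ := isMeasure.Build _ _ _ (tr hfm f0 fT) tr0 tr_ge0 tr_sa.
Let trT : tr hfm f0 fT setT = 1. Proof. exact: fT. Qed.
HB.instance Definition _ := Measure_isProbability.Build _ _ _ (tr hfm f0 fT) trT.
End transfer.

Section pk.
Context d d' (X : measurableType d) (Y : measurableType d') (R : realType).
Variable (kk : R.-pker X ~> Y) (x : X).
Definition pk : probability Y R :=
  @tr _ Y R (kk x) (kk x) (fun _ _ => erefl) (fun A => measure_ge0 (kk x) A) (prob_kernel x).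
End pk.

Lemma bndP (T : Type) (R : realType) (f : T -> R) (M0 : R) :
  (forall x, `|f x| <= M0)%R -> [bounded f x | x in setT].
Proof.
move=> hf; exists M0; split; first exact: num_real.
by move=> M hM x _; exact: le_trans (hf x) (ltW hM).
Qed.

Lemma intb d (T : measurableType d) (R : realType) (mu : {measure set T -> \bar R})
  (f : T -> \bar R) (c : R) : mu setT = 1 -> (0 <= c)%R ->
  (forall x, 0 <= f x <= c%:E) -> measurable_fun setT f ->
  0 <= \int[mu]_x f x <= c%:E.
Proof.
move=> mu1 c0 hf mf; apply/andP; split.
  by apply: integral_ge0 => x _; have /andP[] := hf x.
apply: (@le_trans _ _ (\int[mu]_x (cst c%:E) x)).
  by apply: ge0_le_integral => // x _; have /andP[] := hf x.
by rewrite integral_cst// mu1 mule1.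
Qed.

Lemma intb_fin d (T : measurableType d) (R : realType) (mu : {measure set T -> \bar R})
  (f : T -> \bar R) (c : R) : mu setT = 1 -> (0 <= c)%R ->
  (forall x, 0 <= f x <= c%:E) -> measurable_fun setT f ->
  \int[mu]_x f x \is a fin_num /\ (0 <= fine (\int[mu]_x f x) <= c)%R.
Proof.
move=> mu1 c0 hf mf; have /andP[h0 h1] := intb mu1 c0 hf mf.
have fin : \int[mu]_x f x \is a fin_num.
  by rewrite ge0_fin_numE// (le_lt_trans h1)// ltry.
split => //; apply/andP; split; rewrite -lee_fin fineK//.
Qed.

Section model.
Context (R : realType) (dX dY : measure_display) (SX : measurableType dX) (SY : measurableType dY)
  (s0 : probability SX R) (k : R.-pker (SX * SY) ~> SX) (sY : behavioral_Y SX SY R).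

Definition mem (t : nat) : hist SX SY t -> {measure set SX -> \bar R} :=
  match t return hist SX SY t -> {measure set SX -> \bar R} with
  | 0 => fun _ => s0
  | t'.+1 => fun h => k h.2
  end.

Lemma memE t (h : hist SX SY t) : memory_one s0 k h = mem h.
Proof. by case: t h. Qed.

Let mem_mk t U : measurable U -> measurable_fun [set: hist SX SY t] (mem (t:=t) ^~ U).
Proof.
move=> mU; case: t => [|t] /=.
  by apply: measurable_cst.
exact: (measurableT_comp (measurable_kernel k U mU) measurable_snd).
Qed.

HB.instance Definition _ t := isKernel.Build _ _ _ _ R (@mem t) (@mem_mk t).
Let mem_p t x : @mem t x [set: SX] = 1.
Proof. by case: t x => [|t] x; [exact: probability_setT|exact: prob_kernel]. Qed.
HB.instance Definition _ t := Kernel_isProbability.Build _ _ _ _ R (@mem t) (@mem_p t).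

Definition sYf t := kpre (f:=fst) (sY t) (@measurable_fst _ _ (hist SX SY t) SX).
Definition Kt t := mkproduct (@mem t) (@sYf t).
HB.instance Definition _ t := isKernel.Build _ _ _ _ R (@Kt t) (measurable_kproduct (@mem t) (@sYf t)).

Lemma KtE t (h : hist SX SY t) B : measurable B ->
  Kt h B = \int[mem h]_y sY t h (xsection B y).
Proof.
move=> mB; rewrite /Kt /= /kproduct; apply: eq_integral => y _.
rewrite /= /sYf /kpre /=.
rewrite -(setIT (xsection B y)) -integral_indic//; last exact: measurable_xsection.
apply: eq_integral => z _; rewrite !indicE; congr (_%:E); congr (_%:R).
by rewrite mem_xsection.
Qed.

Lemma sigmaE t (h : hist SX SY t) B : measurable B ->
  sigma s0 k sY h B = Kt h B.
Proof.
by move=> mB; rewrite KtE// /sigma memE.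
Qed.

Let Kt_p t x : @Kt t x [set: SX * SY] = 1.
Proof.
rewrite KtE//.
under eq_integral do rewrite xsectionT' prob_kernel.
by rewrite integral_cst// prob_kernel mule1.
Qed.
HB.instance Definition _ t := Kernel_isProbability.Build _ _ _ _ R (@Kt t) (@Kt_p t).


Section step.
Variables (t : nat) (P : probability (hist SX SY t) R).
Definition KtS := kpre (f:=snd) (@Kt t) (@measurable_snd _ _ unit (hist SX SY t)).
Definition mstep : {measure set (hist SX SY t.+1) -> \bar R} :=
  mkproduct (@kcst _ _ unit _ R P) KtS tt.

Definition Fst (A : set (hist SX SY t.+1)) := \int[P]_h sigma s0 k sY h (xsection A h).

Lemma sigma_ge0 (h : hist SX SY t) B : 0 <= sigma s0 k sY h B.
Proof. by rewrite /sigma memE; apply: integral_ge0 => x _; exact: measure_ge0. Qed.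

Lemma Fst0 A : 0 <= Fst A.
Proof. by apply: integral_ge0 => h _; exact: sigma_ge0. Qed.

Lemma Fst_m A : measurable A -> Fst A = mstep A.
Proof.
move=> mA; rewrite /Fst /mstep /= /kproduct /=; apply: eq_integral => h _.
rewrite sigmaE; last exact: measurable_xsection.
rewrite /KtS /kpre /=.
rewrite -(setIT (xsection A h)) -integral_indic//; last exact: measurable_xsection.
apply: eq_integral => z _; rewrite !indicE; congr (_%:E); congr (_%:R).
by rewrite mem_xsection.
Qed.

Lemma FstT : Fst setT = 1.
Proof.
rewrite /Fst; under eq_integral do rewrite xsectionT' sigmaE// prob_kernel.
by rewrite integral_cst// mul1e; exact: probability_setT.
Qed.


Definition Pnext : probability (hist SX SY t.+1) R := tr Fst_m Fst0 FstT.
End step.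

Lemma hmuP t : exists P : probability (hist SX SY t) R, @hmu _ _ _ _ R s0 k sY t = P.
Proof.
elim: t => [|t [P IH]].
  by exists (\d_ tt : probability unit R).
by exists (Pnext P); rewrite /= IH.
Qed.

Definition Pf t : probability (hist SX SY t) R := proj1_sig (cid (hmuP t)).
Lemma hmuE t : @hmu _ _ _ _ R s0 k sY t = Pf t.
Proof. exact: (proj2_sig (cid (hmuP t))). Qed.

Definition M t : {measure set (SX * SY) -> \bar R} :=
  mkcomp (@kcst _ _ unit _ R (Pf t)) (@KtS t) tt.

Lemma nuE t E : nu s0 k sY t E = \int[Pf t]_h sigma s0 k sY h E.
Proof. by rewrite /nu /= hmuE; under eq_integral do rewrite xsectionTX. Qed.

Lemma nu_m t E : measurable E -> nu s0 k sY t E = M t E.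
Proof.
move=> mE; rewrite nuE /M /= /kcomp /=; apply: eq_integral => h _.
by rewrite sigmaE.
Qed.
Lemma nu0 t E : 0 <= nu s0 k sY t E.
Proof. by rewrite nuE; apply: integral_ge0 => h _; exact: sigma_ge0. Qed.
Lemma nuT t : nu s0 k sY t setT = 1.
Proof.
rewrite nuE; under eq_integral do rewrite sigmaE// prob_kernel.
by rewrite integral_cst// mul1e; exact: probability_setT.
Qed.


Definition numeas t : probability (SX * SY)%type R := tr (@nu_m t) (@nu0 t) (@nuT t).

Lemma int_nu t (f : SX * SY -> \bar R) :
  \int[nu s0 k sY t]_z f z = \int[M t]_z f z.
Proof.
change (\int[numeas t]_z f z = \int[M t]_z f z).
by apply: eq_measure_integral => A mA _; rewrite /= /tr nu_m.
Qed.


Lemma intKt_fst t (h : hist SX SY t) (phi : SX -> \bar R) :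
  (forall x, 0 <= phi x) -> measurable_fun setT phi ->
  \int[Kt h]_z phi z.1 = \int[mem h]_x phi x.
Proof.
move=> phi0 mphi.
transitivity (\int[(pk (@mem t) h \x pk (sY t) h)%E]_z phi z.1).
  by apply: eq_measure_integral => A mA _; rewrite -sigmaE// /sigma memE.
rewrite fubini_tonelli1//=; last exact: measurableT_comp.
apply: eq_integral => x _; rewrite /fubini_F /=.
rewrite integral_cst//; change (phi x * sY t h setT = phi x); by rewrite prob_kernel mule1.
Qed.

Lemma intM t (f : SX * SY -> \bar R) : (forall z, 0 <= f z) -> measurable_fun setT f ->
  \int[M t]_z f z = \int[Pf t]_h \int[Kt h]_z f z.
Proof.
move=> f0 mf.
exact: (@integral_kcomp _ _ _ unit (hist SX SY t) (SX * SY)%type R (@kcst _ _ unit _ R (Pf t)) (@KtS t) tt f f0 mf).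
Qed.

Lemma N0 (phi : SX -> \bar R) : (forall x, 0 <= phi x) -> measurable_fun setT phi ->
  \int[M 0]_z phi z.1 = \int[s0]_x phi x.
Proof.
move=> phi0 mphi.
rewrite intM//; last exact: measurableT_comp.
under eq_integral do rewrite intKt_fst//.
rewrite /= integral_cst//; change (\int[s0]_x phi x * Pf 0 setT = \int[s0]_x phi x).
by rewrite probability_setT mule1.
Qed.

Lemma measurable_G (phi : SX -> \bar R) : (forall x, 0 <= phi x) -> measurable_fun setT phi ->
  measurable_fun setT (fun z => \int[k z]_x phi x).
Proof.
move=> phi0 mphi.
exact: (measurable_fun_integral_kernel (measurable_kernel k)).
Qed.

Lemma N1 t (phi : SX -> \bar R) : (forall x, 0 <= phi x) -> measurable_fun setT phi ->
  \int[M t.+1]_z phi z.1 = \int[M t]_z \int[k z]_x phi x.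
Proof.
move=> phi0 mphi.
rewrite intM//; last exact: measurableT_comp.
under eq_integral do rewrite intKt_fst//.
rewrite /= -int_nu.
have -> : nu s0 k sY t = pushforward (Pf t.+1) snd.
  apply/funext => B; rewrite /nu /pushforward -hmuE; congr (hmu _ _ _ _).
  by apply/seteqP; split => -[h z] /=; [case|].
rewrite ge0_integral_pushforward//= ?preimage_setT//.
- exact: measurable_G.
- by move=> z _; apply: integral_ge0.
Qed.

Lemma MT t : M t setT = 1.
Proof. by rewrite -nu_m// nuT. Qed.

Section psi.
Variables (psi : SX -> R) (mpsi : measurable_fun setT psi) (M0 : R) (M00 : (0 <= M0)%R)
  (hM : forall x, (`|psi x| <= M0)%R).

Definition php := (EFin \o psi)^\+.
Definition phn := (EFin \o psi)^\-.

Lemma mphp : measurable_fun setT php.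
Proof. exact/measurable_funepos/measurable_EFinP. Qed.
Lemma mphn : measurable_fun setT phn.
Proof. exact/measurable_funeneg/measurable_EFinP. Qed.

Lemma bphp x : 0 <= php x <= M0%:E.
Proof.
rewrite funepos_ge0 /= /php funeposE ge_max; apply/andP; split; last exact: M00.
rewrite lee_fin; exact: le_trans (ler_norm _) (hM x).
Qed.
Lemma bphn x : 0 <= phn x <= M0%:E.
Proof.
rewrite funeneg_ge0 /= /phn funenegE ge_max; apply/andP; split; last exact: M00.
rewrite -EFinN lee_fin; apply: le_trans (hM x); rewrite -normrN; exact: ler_norm.
Qed.

Lemma php0 x : 0 <= php x. Proof. by have /andP[] := bphp x. Qed.
Lemma phn0 x : 0 <= phn x. Proof. by have /andP[] := bphn x. Qed.

Lemma AE t : \int[M t]_z (psi z.1)%:E = \int[M t]_z php z.1 - \int[M t]_z phn z.1.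
Proof.
rewrite integralE; congr (_ - _); apply: eq_integral => z _.
  by rewrite /php !funeposE.
by rewrite /phn !funenegE.
Qed.

Lemma A0 : \int[M 0]_z (psi z.1)%:E = \int[s0]_x (psi x)%:E.
Proof.
rewrite AE !N0//; [|exact: phn0|exact: mphn|exact: php0|exact: mphp].
by rewrite [RHS]integralE.
Qed.

Definition Gp z := \int[k z]_x php x.
Definition Gn z := \int[k z]_x phn x.
Lemma Gpb z : Gp z \is a fin_num /\ (0 <= fine (Gp z) <= M0)%R.
Proof. exact: (intb_fin (prob_kernel z) M00 bphp mphp). Qed.
Lemma Gnb z : Gn z \is a fin_num /\ (0 <= fine (Gn z) <= M0)%R.
Proof. exact: (intb_fin (prob_kernel z) M00 bphn mphn). Qed.
Lemma mGp : measurable_fun setT Gp.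
Proof. exact: (measurable_G php0 mphp). Qed.
Lemma mGn : measurable_fun setT Gn.
Proof. exact: (measurable_G phn0 mphn). Qed.

Definition gk z := fine (\int[k z]_s (psi s)%:E).
Lemma gkE z : gk z = (fine (Gp z) - fine (Gn z))%R.
Proof.
rewrite /gk.
have -> : \int[k z]_s (psi s)%:E = Gp z - Gn z by rewrite integralE.
by rewrite fineB//; [case: (Gpb z)|case: (Gnb z)].
Qed.

Lemma int_bnd t (f : SX * SY -> R) c : measurable_fun setT f ->
  (forall z, `|f z| <= c)%R -> (M t).-integrable setT (EFin \o f).
Proof.
move=> mf hf; apply: measurable_bounded_integrable => //.
  by rewrite MT ltry.
exact: bndP hf.
Qed.

Lemma A1 t : \int[M t.+1]_z (psi z.1)%:E = \int[M t]_z (gk z)%:E.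
Proof.
rewrite AE !N1//; [|exact: phn0|exact: mphn|exact: php0|exact: mphp].
under [RHS]eq_integral do rewrite gkE EFinB.
rewrite integralB_EFin//.
- congr (_ - _); apply: eq_integral => z _; rewrite fineK//.
    by case: (Gpb z).
  by case: (Gnb z).
- apply: (@int_bnd t _ M0); first exact: measurableT_comp (fine_measurable measurableT) mGp.
  by move=> z; case: (Gpb z) => _ /andP[h0 h1]; rewrite ger0_norm.
- apply: (@int_bnd t _ M0); first exact: measurableT_comp (fine_measurable measurableT) mGn.
  by move=> z; case: (Gnb z) => _ /andP[h0 h1]; rewrite ger0_norm.
Qed.

Lemma diffb (x y : R) : (0 <= x <= M0)%R -> (0 <= y <= M0)%R -> (`|x - y| <= M0)%R.
Proof. move=> /andP[? ?] /andP[? ?]; rewrite ler_norml; apply/andP; split; lra. Qed.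

Definition alpha t := fine (\int[M t]_z (psi z.1)%:E).

Lemma Afin t : \int[M t]_z (psi z.1)%:E = (alpha t)%:E /\ (`|alpha t| <= M0)%R.
Proof.
have mp : measurable_fun setT (fun z : SX * SY => php z.1) by exact: measurableT_comp mphp _.
have mn : measurable_fun setT (fun z : SX * SY => phn z.1) by exact: measurableT_comp mphn _.
have [fp bp] := intb_fin (MT t) M00 (fun z => bphp z.1) mp.
have [fn bn] := intb_fin (MT t) M00 (fun z => bphn z.1) mn.
rewrite /alpha AE; split.
  by rewrite fineB// EFinB !fineK.
by rewrite fineB//; exact: diffb.
Qed.

Lemma mgk : measurable_fun setT gk.
Proof.
have -> : gk = (fun z => fine (Gp z) - fine (Gn z))%R by apply/funext => z; rewrite gkE.
apply: measurable_funB.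
  exact: measurableT_comp (fine_measurable measurableT) mGp.
exact: measurableT_comp (fine_measurable measurableT) mGn.
Qed.

Lemma bgk z : (`|gk z| <= M0)%R.
Proof. by rewrite gkE; apply: diffb; [case: (Gpb z)|case: (Gnb z)]. Qed.

Lemma termE t (lam : R) :
  fine (\int[nu s0 k sY t]_z ((psi z.1 - lam * fine (\int[k z]_s (psi s)%:E))%:E)) =
  (alpha t - lam * alpha t.+1)%R.
Proof.
rewrite int_nu.
under eq_integral do rewrite EFinB.
rewrite integralB_EFin//; last 2 first.
- apply: (@int_bnd t _ M0); first exact: measurableT_comp mpsi _.
  by move=> z; exact: hM.
- apply: (@int_bnd t _ (`|lam| * M0)%R).
    by apply: measurable_funM => //; exact: mgk.
  by move=> z; rewrite normrM ler_wpM2l// bgk.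
under [X in _ - X]eq_integral do rewrite EFinM.
rewrite integralZl//; last first.
  by apply: (@int_bnd t _ M0); [exact: mgk|exact: bgk].
rewrite -A1 (Afin t).1 (Afin t.+1).1.
by rewrite -EFinM -EFinB.
Qed.

End psi.
Lemma main_model (lam : R) (psi : SX -> R) (mpsi : measurable_fun setT psi) (M0 : R)
  (M00 : (0 <= M0)%R) (hM : forall x, (`|psi x| <= M0)%R) : (0 < lam < 1)%R ->
  (fun n : nat => \sum_(0 <= t < n)
      lam ^+ t * fine (\int[nu s0 k sY t]_z
         ((psi z.1 - lam * fine (\int[k z]_s (psi s)%:E))%:E)))%R
    @ \oo --> fine (\int[s0]_s (psi s)%:E).
Proof.
move=> /andP[lam0 lam1].
pose a := alpha psi.
have HT t : fine (\int[nu s0 k sY t]_z ((psi z.1 - lam * fine (\int[k z]_s (psi s)%:E))%:E))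
   = (a t - lam * a t.+1)%R by exact: (termE mpsi M00 hM).
have tele n : (\sum_(0 <= t < n) lam ^+ t * fine (\int[nu s0 k sY t]_z
         ((psi z.1 - lam * fine (\int[k z]_s (psi s)%:E))%:E)) = a 0 - M0 * 0 + (- (lam ^+ n * a n)))%R.
  elim: n => [|n IH]; first by rewrite big_geq// expr0 mul1r mulr0 subr0 addrN.
  by rewrite big_nat_recr//= IH HT exprSr; ring.
have -> : fine (\int[s0]_s (psi s)%:E) = (a 0 - M0 * 0 + - 0)%R.
  by rewrite /a /alpha (A0 mpsi M00 hM) mulr0 !subr0.
under eq_fun do rewrite tele.
apply: cvgD; first exact: cvg_cst.
apply: cvgN.
have hl : (`|lam| < 1)%R by rewrite ger0_norm// ltW.
have hb n : (`|a n| <= M0)%R by exact: (Afin mpsi M00 hM n).2.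
apply: (squeeze_cvgr (f := (fun n => - (M0 * lam ^+ n))%R) (h := (fun n => M0 * lam ^+ n)%R)).
- apply: nearW => n; rewrite -ler_norml normrM ger0_norm ?exprn_ge0 ?(ltW lam0)//.
  by rewrite mulrC ler_wpM2r// exprn_ge0// ltW.
- have h : (fun n => M0 * lam ^+ n)%R @ \oo --> (M0 * 0)%R.
    by apply: cvgMl_tmp; exact: cvg_expr.
  rewrite -oppr0 -(mulr0 M0); exact: (cvgN h).
- have h : (fun n => M0 * lam ^+ n)%R @ \oo --> (M0 * 0)%R.
    by apply: cvgMl_tmp; exact: cvg_expr.
  by rewrite mulr0 in h.
Qed.

End model.

Local Close Scope ereal_scope.
Unset Implicit Arguments.

Theorem proposition1 (R : realType) (dX dY : measure_display)
  (SX : measurableType dX) (SY : measurableType dY) (lam : R)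
  (psi : SX -> R) (s0 : probability SX R) (k : R.-pker (SX * SY) ~> SX)
  (sY : behavioral_Y SX SY R) :
  0 < lam < 1 ->
  measurable_fun setT psi ->
  (exists M : R, forall x, `|psi x| <= M) ->
  (fun n : nat => \sum_(0 <= t < n)
      lam ^+ t * fine (\int[nu s0 k sY t]_z
         ((psi z.1 - lam * fine (\int[k z]_s (psi s)%:E))%:E))%E)
    @ \oo --> fine (\int[s0]_s (psi s)%:E)%E.
Proof.
move=> hlam mpsi [M0 hM].
apply: (@main_model R dX dY SX SY s0 k sY lam psi mpsi (Num.max M0 0)) => //.
  by rewrite le_max lexx orbT.
by move=> x; rewrite le_max hM.
Qed.
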